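(* For any $\gamma\ge0$, the function \[ S_\gamma(x)=\hat n_0(x)+\gamma\,m(x),\qquad m(x)=\frac{x^2e^x}{(e^x-1)^2}, \] is a stationary (time-independent) super-solution of the Kompaneets problem.
   Context: $\hat n_0(x)=\frac{x^2}{e^x-1}$. Let $J(x,n)=x^2\partial_xn+(x^2-2x)n+n^2$. A function $n(x,t)$, $C^{2,1}$ for $x,t>0$, with $n_t\to n_0$ in $L^1$ as $t\to0$, such that for $0<s\le t$ the limit $n_t(0)=\lim_{x\to0^+}n_t(x)$ exists and $\lim_{x\to0^+}\int_s^t|x^2\partial_xn_\tau(x)|\,d\tau=0$, is a super-solution of the Kompaneets problem if for all $0<s\le t$: $\partial_tn\ge\partial_xJ(x,n)$ and $\liminf_{x\to\infty}\int_s^tJ(x,n_\tau)\,d\tau\ge0$. *)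

(* Defs.v *)
From Stdlib Require Import Reals.
From Coquelicot Require Import Coquelicot.
Open Scope R_scope.

Definition n0hat (x : R) : R := x ^ 2 / (exp x - 1).

Definition mfun (x : R) : R := x ^ 2 * exp x / (exp x - 1) ^ 2.

Definition S (gamma x : R) : R := n0hat x + gamma * mfun x.

(* Functions of (x,t) are written n x t, i.e. n_t(x) = n x t. *)

Definition Jflux (n : R -> R -> R) (t x : R) : R :=
  x ^ 2 * Derive (fun y => n y t) x + (x ^ 2 - 2 * x) * n x t + (n x t) ^ 2.

Definition C21 (n : R -> R -> R) : Prop :=
  forall x t, 0 < x -> 0 < t ->
    ex_derive (fun y => n y t) x /\
    ex_derive (fun y => Derive (fun z => n z t) y) x /\
    ex_derive (fun s => n x s) t /\
    continuous (fun p : R * R => n (fst p) (snd p)) (x, t) /\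
    continuous (fun p : R * R => Derive (fun z => n z (snd p)) (fst p)) (x, t) /\
    continuous (fun p : R * R =>
       Derive (fun y => Derive (fun z => n z (snd p)) y) (fst p)) (x, t) /\
    continuous (fun p : R * R => Derive (fun s => n (fst p) s) (snd p)) (x, t).

(* n_t -> n0 in L^1(0,oo) as t -> 0+ (improper integral over (0,oo)). *)
Definition L1_initial (n : R -> R -> R) (n0 : R -> R) : Prop :=
  exists I : R -> R,
    (forall t, 0 < t ->
       is_RInt_gen (fun x => Rabs (n x t - n0 x))
                   (at_right 0) (Rbar_locally p_infty) (I t)) /\
    filterlim I (at_right 0) (locally 0).

Definition super_solution (n : R -> R -> R) (n0 : R -> R) : Prop :=
  C21 n /\
  L1_initial n n0 /\
  (forall t, 0 < t -> exists l : R, filterlim (fun x => n x t) (at_right 0) (locally l)) /\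
  (forall s t, 0 < s -> s <= t ->
     filterlim (fun x => RInt (fun tau => Rabs (x ^ 2 * Derive (fun y => n y tau) x)) s t)
               (at_right 0) (locally 0)) /\
  (forall x t, 0 < x -> 0 < t ->
     Derive (fun y => Jflux n t y) x <= Derive (fun s => n x s) t) /\
  (* liminf_{x -> oo} int_s^t J(x, n_tau) dtau >= 0 for 0 < s <= t *)
  (forall s t, 0 < s -> s <= t ->
     forall eps : R, 0 < eps ->
       Rbar_locally p_infty (fun x => - eps <= RInt (fun tau => Jflux n tau x) s t)).

(* Main.v *)
Require Import Defs.
From Stdlib Require Import Reals Lra Psatz.
From Coquelicot Require Import Coquelicot.
Open Scope R_scope.

Definition ff (x : R) : R := / (exp x - 1).

Lemma Dpos x : 0 < x -> 0 < exp x - 1.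
Proof. intros H. pose proof (exp_ineq1 x ltac:(lra)). lra. Qed.

Lemma S_eq b x : 0 < x -> S b x = x^2 * ((1+b) * ff x + b * ff x ^ 2).
Proof.
  intros H. pose proof (Dpos x H). unfold S, n0hat, mfun, ff. field. lra.
Qed.

Definition S1 b x := 2*x*((1+b)*ff x + b*ff x^2) + x^2*((1+b) + 2*b*ff x)*(-(ff x + ff x^2)).

Definition S2 b x :=
  let g := (1+b)*ff x + b*ff x^2 in
  let gf := (1+b) + 2*b*ff x in
  let h := -(ff x + ff x^2) in
  2*g + 4*x*gf*h + x^2*2*b*h^2 - x^2*gf*(1+2*ff x)*h.

Definition K b x := b^2 * x^4 * (ff x + ff x^2)^2.
Definition Kd b x := b^2*(4*x^3*(ff x + ff x^2)^2 + x^4*2*(ff x + ff x^2)*(1+2*ff x)*(-(ff x + ff x^2))).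

Lemma derS b x : 0 < x -> is_derive (fun y => S b y) x (S1 b x).
Proof.
  intros H. pose proof (Dpos x H). unfold S, n0hat, mfun, S1, ff.
  auto_derive.
  - repeat split; intro HH; nra.
  - field. lra.
Qed.

Lemma derS1 b x : 0 < x -> is_derive (S1 b) x (S2 b x).
Proof.
  intros H. pose proof (Dpos x H). unfold S1, S2, ff.
  auto_derive.
  - repeat split; intro HH; nra.
  - field. lra.
Qed.

Lemma exS2 b x : 0 < x -> ex_derive (S2 b) x.
Proof.
  intros H. pose proof (Dpos x H). unfold S2, ff.
  auto_derive. repeat split; intro HH; nra.
Qed.

Lemma derK b x : 0 < x -> is_derive (K b) x (Kd b x).
Proof.
  intros H. pose proof (Dpos x H). unfold K, Kd, ff.
  auto_derive.
  - repeat split; intro HH; nra.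
  - field. lra.
Qed.

Lemma loc_pos x : 0 < x -> locally x (fun y => 0 < y).
Proof.
  intros H. exists (mkposreal x H). intros y Hy.
  unfold ball in Hy; simpl in Hy; unfold AbsRing_ball, abs, minus, plus, opp in Hy; simpl in Hy.
  apply Rabs_def2 in Hy. lra.
Qed.

Lemma key x : 0 < x -> 2*(exp x - 1) <= x*(exp x + 1).
Proof.
  intros H.
  destruct (MVT_cor2 (fun y => y*(exp y + 1) - 2*(exp y - 1)) (fun y => 1 - exp y + y * exp y) 0 x H)
    as [c [Hc Hc2]].
  { intros c _. apply is_derive_Reals. auto_derive; [auto|ring]. }
  assert (0 < 1 - exp c + c * exp c).
  { pose proof (exp_ineq1 (-c) ltac:(lra)).
    pose proof (exp_pos c).
    assert (exp c * exp (-c) = 1) by (rewrite <- exp_plus; replace (c + -c) with 0 by ring; apply exp_0).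
    nra. }
  rewrite exp_0 in Hc. nra.
Qed.

Lemma wbounds x : 0 < x -> 0 <= x * ff x <= 1 /\ 1 - x * ff x <= x.
Proof.
  intros H. pose proof (Dpos x H).
  pose proof (exp_ineq1_le x).
  pose proof (exp_ineq1_le (-x)).
  pose proof (exp_pos x).
  assert (exp x * exp (-x) = 1) by (rewrite <- exp_plus; replace (x + -x) with 0 by ring; apply exp_0).
  assert (exp x - 1 <= x * exp x) by nra.
  unfold ff.
  assert (Hf : 0 < / (exp x - 1)) by (apply Rinv_0_lt_compat; lra).
  assert (Hw : x * / (exp x - 1) * (exp x - 1) = x) by (field; lra).
  split; [split|]; nra.
Qed.

Lemma lim_right0 (g : R -> R) (l : R) :
  (forall eps, 0 < eps -> exists d, 0 < d /\ forall x, 0 < x < d -> Rabs (g x - l) < eps) ->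
  filterlim g (at_right 0) (locally l).
Proof.
  intros H. apply filterlim_locally. intros eps.
  destruct (H eps (cond_pos eps)) as [d [dpos Hd]].
  exists (mkposreal d dpos). intros y Hy Hy0.
  unfold ball in Hy; simpl in Hy; unfold AbsRing_ball, abs, minus, plus, opp in Hy; simpl in Hy.
  unfold ball; simpl; unfold AbsRing_ball, abs, minus, plus, opp; simpl.
  apply Hd. apply Rabs_def2 in Hy. lra.
Qed.

Lemma J_eq b t y : 0 < y -> Jflux (fun x _ => S b x) t y = K b y.
Proof.
  intros H. unfold Jflux.
  replace (Derive (fun y0 => S b y0) y) with (S1 b y) by (symmetry; apply is_derive_unique; apply derS; exact H).
  rewrite S_eq by exact H. unfold S1, K. ring.
Qed.

Lemma Kd_nonpos b x : 0 < x -> Kd b x <= 0.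
Proof.
  intros H. pose proof (key x H). pose proof (Dpos x H).
  assert (E1 : x*(1+2*ff x) - 2 = (x*(exp x+1) - 2*(exp x -1)) * ff x) by (unfold ff; field; lra).
  assert (Hf : 0 < ff x) by (unfold ff; apply Rinv_0_lt_compat; lra).
  assert (E2 : Kd b x = - (2 * b^2 * x^3 * (ff x + ff x^2)^2) * (x*(1+2*ff x) - 2)) by (unfold Kd; ring).
  rewrite E2, E1.
  assert (0 <= 2 * b^2 * x^3 * (ff x + ff x^2)^2).
  { apply Rmult_le_pos. apply Rmult_le_pos. apply Rmult_le_pos. lra. apply pow2_ge_0.
    apply pow_le; lra. apply pow2_ge_0. }
  assert (0 <= (x*(exp x+1) - 2*(exp x -1)) * ff x) by (apply Rmult_le_pos; lra).
  nra.
Qed.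

Lemma K_nonneg b x : 0 <= K b x.
Proof. unfold K. replace (x^4) with ((x^2)^2) by ring.
  apply Rmult_le_pos. apply Rmult_le_pos; apply pow2_ge_0. apply pow2_ge_0. Qed.

Lemma lim_S b : 0 <= b -> filterlim (fun x => S b x) (at_right 0) (locally b).
Proof.
  intros Hb. apply lim_right0. intros eps He.
  exists (eps / (2 + 3*b)). split.
  { apply Rdiv_lt_0_compat; lra. }
  intros x [Hx Hxd].
  assert (Hxd' : (2+3*b) * x < eps).
  { apply Rmult_lt_compat_l with (r := 2+3*b) in Hxd; [|lra].
    replace ((2 + 3 * b) * (eps / (2 + 3 * b))) with eps in Hxd by (field; lra). lra. }
  destruct (wbounds x Hx) as [[Hw0 Hw1] Hw2].
  rewrite S_eq by exact Hx.
  set (w := x * ff x) in *.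
  replace (x ^ 2 * ((1 + b) * ff x + b * ff x ^ 2) - b) with
      ((1+b)*x*w - b*(1-w)*(1+w)) by (unfold w; ring).
  assert (0 <= (1+b)*x*w <= (1+b)*x).
  { split. apply Rmult_le_pos; nra. assert (0 <= (1+b)*x) by nra. nra. }
  assert (0 <= b*(1-w)*(1+w) <= 2*b*x).
  { split. apply Rmult_le_pos; nra.
    assert (0 <= b*(1-w)) by nra. assert (b*(1-w) <= b*x) by nra. nra. }
  apply Rabs_def1; nra.
Qed.

Lemma lim_flux b s t : 0 <= b -> s <= t ->
  filterlim (fun x => (t - s) * Rabs (x^2 * Derive (fun y => S b y) x)) (at_right 0) (locally 0).
Proof.
  intros Hb Hst. apply lim_right0. intros eps He.
  set (C := (t - s + 1) * (4 + 10*b + 1)).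
  assert (HC : 0 < C) by (unfold C; apply Rmult_lt_0_compat; lra).
  exists (Rmin 1 (eps / C)). split.
  { apply Rmin_pos; [lra|]. apply Rdiv_lt_0_compat; lra. }
  intros x [Hx Hxd].
  assert (Hx1 : x < 1) by (eapply Rlt_le_trans; [exact Hxd| apply Rmin_l]).
  assert (Hxe : x < eps / C) by (eapply Rlt_le_trans; [exact Hxd| apply Rmin_r]).
  assert (HCx : C * x < eps).
  { apply Rmult_lt_compat_l with (r := C) in Hxe; [|lra].
    replace (C * (eps / C)) with eps in Hxe by (field; lra). lra. }
  destruct (wbounds x Hx) as [[Hw0 Hw1] Hw2].
  replace (Derive (fun y => S b y) x) with (S1 b x)
    by (symmetry; apply is_derive_unique; apply derS; exact Hx).
  set (w := x * ff x) in *.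
  set (B := 2*((1+b)*x*w + b*w^2) - ((1+b)*x + 2*b*w)*(x*w + w^2)).
  assert (E : x^2 * S1 b x = x * B) by (unfold B, w, S1; ring).
  rewrite E.
  assert (HB : Rabs B <= 4 + 10*b).
  { assert (0 <= x*w <= 1) by (split; nra).
    assert (0 <= w^2 <= 1) by (split; nra).
    assert (0 <= (1+b)*x*w + b*w^2 <= 1 + 2*b) by (split; nra).
    assert (0 <= (1+b)*x + 2*b*w <= 1 + 3*b) by (split; nra).
    assert (0 <= x*w + w^2 <= 2) by (split; nra).
    assert (0 <= ((1+b)*x + 2*b*w)*(x*w + w^2) <= (1+3*b)*2) by (split; nra).
    unfold B. apply Rabs_le. split; nra. }
  rewrite Rminus_0_r, Rabs_mult, (Rabs_pos_eq (t - s)) by lra.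
  rewrite Rabs_Rabsolu, Rabs_mult, (Rabs_pos_eq x) by lra.
  assert (0 <= Rabs B) by apply Rabs_pos.
  assert ((t - s) * (x * Rabs B) <= C * x).
  { unfold C. assert (x * Rabs B <= x * (4 + 10*b + 1)) by nra.
    assert ((t-s) * (x * Rabs B) <= (t-s) * (x * (4 + 10*b + 1))) by nra. nra. }
  lra.
Qed.

Lemma DS_loc b x : 0 < x -> locally x (fun y => Derive (fun z => S b z) y = S1 b y).
Proof.
  intros H. apply (filter_imp (fun y => 0 < y)); [|apply loc_pos; exact H].
  intros y Hy. apply is_derive_unique. apply derS. exact Hy.
Qed.

Lemma DDS_loc b x : 0 < x -> locally x (fun y => Derive (fun w => Derive (fun z => S b z) w) y = S2 b y).
Proof.
  intros H. apply (filter_imp (fun y => 0 < y)); [|apply loc_pos; exact H].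
  intros y Hy. rewrite (Derive_ext_loc _ (S1 b) y) by (apply DS_loc; exact Hy).
  apply is_derive_unique. apply derS1. exact Hy.
Qed.

Theorem lemma3p6 (gamma : R) (hgamma : 0 <= gamma) :
  super_solution (fun x _ => S gamma x) (S gamma).
Proof.
  unfold super_solution. split; [|split; [|split; [|split; [|split]]]].
  -
    intros x t Hx Ht. cbv beta.
    split; [|split; [|split; [|split; [|split; [|split]]]]].
    + exists (S1 gamma x). apply derS. exact Hx.
    + apply ex_derive_ext_loc with (f := S1 gamma).
      { apply (filter_imp (fun y => Derive (fun z => S gamma z) y = S1 gamma y));
          [intros; symmetry; auto | apply DS_loc; exact Hx]. }
      exists (S2 gamma x). apply derS1. exact Hx.
    + apply ex_derive_const.
    + apply continuous_comp with (f := fst) (g := fun y => S gamma y).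
      apply continuous_fst. simpl. apply (ex_derive_continuous (K:=R_AbsRing) (V:=R_NormedModule)). exists (S1 gamma x). apply derS. exact Hx.
    + apply continuous_comp with (f := fst) (g := fun y => Derive (fun z => S gamma z) y).
      apply continuous_fst. simpl.
      apply continuous_ext_loc with (g := S1 gamma).
      { apply (filter_imp (fun y => Derive (fun z => S gamma z) y = S1 gamma y));
          [intros; symmetry; auto | apply DS_loc; exact Hx]. }
      apply (ex_derive_continuous (K:=R_AbsRing) (V:=R_NormedModule)). exists (S2 gamma x). apply derS1. exact Hx.
    + apply continuous_comp with (f := fst) (g := fun y => Derive (fun w => Derive (fun z => S gamma z) w) y).
      apply continuous_fst. simpl.
      apply continuous_ext_loc with (g := S2 gamma).
      { apply (filter_imp (fun y => Derive (fun w => Derive (fun z => S gamma z) w) y = S2 gamma y));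
          [intros; symmetry; auto | apply DDS_loc; exact Hx]. }
      apply (ex_derive_continuous (K:=R_AbsRing) (V:=R_NormedModule)). apply exS2. exact Hx.
    + apply continuous_ext with (f := fun _ => 0).
      { intros p. symmetry. apply Derive_const. }
      apply continuous_const.
  -
    exists (fun _ => 0). split.
    + intros t Ht. intros P [eps HP].
      exists (fun _ => True) (fun _ => True).
      * exists (mkposreal 1 Rlt_0_1). intros; exact I.
      * exists 0. intros; exact I.
      * intros a c _ _. exists 0. split.
        -- apply is_RInt_ext with (f := fun _ => 0).
           { intros y _. rewrite Rminus_diag, Rabs_R0. reflexivity. }
           generalize (is_RInt_const (V:=R_NormedModule) a c 0).
           unfold scal; simpl; unfold mult; simpl. rewrite Rmult_0_r. auto.
        -- apply HP. apply ball_center.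
    + apply filterlim_const.
  - intros t Ht. exists gamma. apply lim_S. exact hgamma.
  - intros s t Hs Hst. cbv beta.
    eapply filterlim_ext; [|apply (lim_flux gamma s t hgamma Hst)].
    intros x. rewrite RInt_const. unfold scal; simpl; unfold mult; simpl. reflexivity.
  - intros x t Hx Ht.
    rewrite Derive_const.
    rewrite (Derive_ext_loc _ (K gamma) x).
    + rewrite (is_derive_unique _ _ _ (derK gamma x Hx)). apply Kd_nonpos. exact Hx.
    + apply (filter_imp (fun y => 0 < y)); [|apply loc_pos; exact Hx].
      intros y Hy. apply J_eq. exact Hy.
  - intros s t Hs Hst eps He. exists 0. intros x Hx.
    rewrite (RInt_ext _ (fun _ => K gamma x)).
    + rewrite RInt_const. unfold scal; simpl; unfold mult; simpl.
      pose proof (K_nonneg gamma x). nra.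
    + intros y _. apply J_eq. exact Hx.
Qed.
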